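(* Let $(A_i,\gamma_i)_{i\in I}$ be a family of quasiordered sets with all $A_i$ nonempty, and let $j,k\in I$, $j\neq k$, be such that there exist $a_j,b_j,c_j\in A_j$ with $a_j\neq c_j$, $(a_j,c_j)\in\gamma_j$, $(a_j,b_j)\notin\gamma_j$, and such that $\gamma_k\neq A_k\times A_k$ (with $|A_k|>1$). Then the product quasiorder $\prod_{i\in I}\gamma_i$ is not a half-space on $\prod_{i\in I}A_i$.
   Context: A quasiorder on $A$ is a reflexive and transitive relation; $\Delta_A=\{(a,a)\mid a\in A\}$. A quasiorder $\alpha$ on $A$ is a half-space if there is a quasiorder $\beta$ on $A$ with $\alpha\cup\beta=A\times A$ and $\alpha\cap\beta=\Delta_A$. The direct product quasiorder is $\prod_{i\in I}\gamma_i=\{(\underline a,\underline b)\mid \underline a,\underline b\in\prod_{i\in I}A_i,\ (\underline a(i),\underline b(i))\in\gamma_i \text{ for all } i\in I\}$. *)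

(* Defs.v *)
Definition reflexive_rel {A : Type} (r : A -> A -> Prop) : Prop :=
  forall a, r a a.

Definition transitive_rel {A : Type} (r : A -> A -> Prop) : Prop :=
  forall a b c, r a b -> r b c -> r a c.

Definition quasiorder {A : Type} (r : A -> A -> Prop) : Prop :=
  reflexive_rel r /\ transitive_rel r.

Definition half_space {A : Type} (alpha : A -> A -> Prop) : Prop :=
  quasiorder alpha /\
  exists beta : A -> A -> Prop,
    quasiorder beta /\
    (forall a b, alpha a b \/ beta a b) /\
    (forall a b, (alpha a b /\ beta a b) <-> a = b).

Definition prod_rel {I : Type} {A : I -> Type}
  (gamma : forall i, A i -> A i -> Prop) : (forall i, A i) -> (forall i, A i) -> Prop :=
  fun a b => forall i, gamma i (a i) (b i).

(* Main.v *)
Require Import Defs.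
From Stdlib Require Import Classical ClassicalEpsilon Eqdep.

Definition upd {I : Type} {A : I -> Type} (f : forall i, A i) (i0 : I) (v : A i0)
  : forall i, A i :=
  fun i => match excluded_middle_informative (i0 = i) with
           | left e => eq_rect i0 A v i e
           | right _ => f i end.

Lemma upd_eq {I : Type} {A : I -> Type} (f : forall i, A i) i0 v :
  upd f i0 v i0 = v.
Proof.
  unfold upd; destruct (excluded_middle_informative (i0 = i0)) as [e|n].
  - symmetry; apply Eq_rect_eq.eq_rect_eq.
  - exfalso; apply n; reflexivity.
Qed.

Lemma upd_neq {I : Type} {A : I -> Type} (f : forall i, A i) i0 v i :
  i0 <> i -> upd f i0 v i = f i.
Proof.
  intro H; unfold upd; destruct (excluded_middle_informative (i0 = i)) as [e|n].
  - contradiction.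
  - reflexivity.
Qed.

Theorem lemma3p1 (I : Type) (A : I -> Type)
  (gamma : forall i, A i -> A i -> Prop)
  (Hqo : forall i, quasiorder (gamma i))
  (Hne : forall i, inhabited (A i))
  (j k : I) (Hjk : j <> k)
  (Hj : exists aj bj cj : A j,
          aj <> cj /\ gamma j aj cj /\ ~ gamma j aj bj)
  (Hk : ~ (forall x y : A k, gamma k x y))
  (Hk1 : exists x y : A k, x <> y) :
  ~ half_space (prod_rel gamma).
Proof.
  intros [_ [beta [[_ Hbt] [Hun Hcap]]]].
  destruct Hj as [aj [bj [cj [Hac [Hg Hng]]]]].
  assert (exists p q : A k, ~ gamma k p q) as [p [q Hpq]].
  { apply NNPP; intro H; apply Hk; intros x y; apply NNPP; intro H'.
    apply H; exists x, y; exact H'. }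
  set (d := fun i => epsilon (Hne i) (fun _ => True)).
  set (x := upd (upd d k q) j aj).
  set (y := upd (upd d k p) j bj).
  set (z := upd (upd d k q) j cj).
  assert (Hxz : prod_rel gamma x z).
  { intro i. destruct (classic (j = i)) as [<-|n].
    - unfold x, z; rewrite !upd_eq; exact Hg.
    - unfold x, z; rewrite (upd_neq _ _ aj) by exact n; rewrite (upd_neq _ _ cj) by exact n.
      destruct (classic (k = i)) as [<-|m].
      + rewrite upd_eq; apply (proj1 (Hqo k)).
      + rewrite (upd_neq _ _ q) by exact m; apply (proj1 (Hqo i)). }
  assert (Hxy : beta x y).
  { destruct (Hun x y) as [H|H]; [|exact H].
    exfalso; apply Hng; specialize (H j); unfold x, y in H; rewrite !upd_eq in H; exact H. }
  assert (Hyz : beta y z).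
  { destruct (Hun y z) as [H|H]; [|exact H].
    exfalso; apply Hpq; specialize (H k); unfold y, z in H.
    rewrite (upd_neq _ _ bj) in H by exact Hjk; rewrite (upd_neq _ _ cj) in H by exact Hjk. rewrite !upd_eq in H; exact H. }
  assert (Hx : x = z) by (apply Hcap; split; [exact Hxz | eapply Hbt; eauto]).
  apply Hac. assert (H := f_equal (fun f => f j) Hx). simpl in H.
  unfold x, z in H; rewrite !upd_eq in H; exact H.
Qed.
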